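(* Let $H : \mathcal E(2) \rightarrow \mathcal E(4)$ be a chain homotopy between $(23) \circ F$ and $G$ (i.e. $\partial\circ H + H\circ\partial = (23)\circ F + G$) satisfying \begin{equation*} H \circ (12) = (12)(34) \circ H. \end{equation*} Then, for any $\mathcal E$-algebra $A$ and $i \geq 0$, the map $\zeta_i: A \otimes A \to A$ defined by \begin{equation*} \zeta_i(\alpha \otimes \beta) = H(\tilde{x}_i)(\alpha \otimes \alpha \otimes \beta \otimes \beta) \end{equation*} is a Cartan $i$-coboundary, i.e. \begin{equation*} (\partial \zeta_i)(\alpha \otimes \beta) = (\alpha \cup_0 \beta) \cup_i (\alpha \cup_0 \beta) + \sum_{i=j+k} (\alpha \cup_j \alpha) \cup_0 (\beta \cup_k \beta). \end{equation*}
   Context: All constructions are over $\mathbb F_2$. $\mathcal E$ denotes the Barratt-Eccles operad: $\mathcal E(r) = N_*(E(r))$, the normalized chains of the simplicial set $E(r)$ whose $n$-simplices are tuples $(\sigma_0,\dots,\sigma_n)$ of permutations in $\Sigma_r$ (faces delete, degeneracies repeat an entry), with $\Sigma_r$ acting by left multiplication on each entry, and operadic composition $\circ_{\mathcal E} = N_*(\circ_E)\circ EZ^r$, where $\circ_E$ applies composition of permutations coordinatewise and $EZ$ is the Eilenberg-Zilber map. An $\mathcal E$-algebra $A$ is an operad morphism $\mathcal E \to \mathrm{End}(A)$; elements of $\mathcal E$ are identified with their images, and $\partial$ on $\mathrm{Hom}$ complexes is $\partial f = \partial\circ f + f\circ\partial$. Let $\tilde{x}_i = (e, (12), e, \dots,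 (12)^i) \in \mathcal E(2)_i$. The cup-$i$ product on $A$ is $\alpha \cup_i \beta := \tilde{x}_i(\alpha \otimes \beta)$. The chain maps $F, G : \mathcal E(2) \to \mathcal E(4)$ are defined on basis elements by $F(\sigma_0,\dots,\sigma_n) = \circ_{\mathcal E}\big((\sigma_0,\dots,\sigma_n) \otimes \tilde{x}_0 \otimes \tilde{x}_0\big)$ and $G(\sigma_0,\dots,\sigma_n) = \circ_{\mathcal E}\big(\tilde{x}_0 \otimes AW(\sigma_0,\dots,\sigma_n)^{\otimes 2}\big)$, with $AW$ the Alexander-Whitney map applied to the diagonal simplex. *)

(* Defs.v *)
From HB Require Import structures.
From mathcomp Require Import all_boot all_order all_algebra all_fingroup.
From mathcomp Require Import finmap monalg.

Set Implicit Arguments.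
Unset Strict Implicit.
Unset Printing Implicit Defensive.

Import GRing.Theory.
Local Open Scope ring_scope.

(* The Barratt-Eccles operad over F_2.                                     *)
(* An n-simplex of E(r) is a sequence (s_0,...,s_n) of permutations in     *)
(* 'S_r (the list has n+1 entries).  It is non-degenerate iff consecutive   *)
(* entries differ.  Normalized chains N_*(E(r)) = free F_2-module on the   *)
(* non-degenerate simplices (all degrees together; the degree of a basis   *)
(* simplex s is (size s).-1).                                              *)

Definition nondeg {r} (s : seq 'S_r) : bool :=
  (s != [::]) && sorted (fun a b : 'S_r => a != b) s.

Definition ndsimp (r : nat) := {s : seq 'S_r | nondeg s}.

Notation chain r := {malg 'F_2[ndsimp r]}.

(* the basis element of a simplex; degenerate simplices are 0 in N_* *)
Definition simp {r} (s : seq 'S_r) : chain r :=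
  if insub s is Some s' then << s' >> else 0.

Definition homog {r} (n : nat) (c : chain r) : Prop :=
  forall s : ndsimp r, s \in msupp c -> size (val s) = n.+1.

Definition linext {r r'} (f : ndsimp r -> chain r') (c : chain r) : chain r' :=
  \sum_(s <- msupp c) c@_s *: f s.

Definition face {T} (i : nat) (s : seq T) : seq T := take i s ++ drop i.+1 s.

(* boundary (over F_2 no signs) *)
Definition bd_simp {r} (s : seq 'S_r) : chain r :=
  \sum_(i < size s) simp (face i s).
Definition bd {r} : chain r -> chain r := linext (fun s => bd_simp (val s)).

(* left action of 'S_r by left multiplication on each entry:            *)
(* sigma . (s_0,...,s_n) = (sigma o s_0, ..., sigma o s_n).              *)
(* (mathcomp's product is (s * t) x = t (s x), so sigma o tau = tau * sigma) *)
Definition act_simp {r} (sigma : 'S_r) (s : seq 'S_r) : chain r :=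
  simp [seq (tau * sigma)%g | tau <- s].
Definition sact {r} (sigma : 'S_r) : chain r -> chain r :=
  linext (fun s => act_simp sigma (val s)).

Definition ar (k : nat) (j : nat -> nat) : nat := sumn [seq j m | m <- iota 0 k].
Definition off (j : nat -> nat) (m : nat) : nat := sumn [seq j l | l <- iota 0 m].

(* gamma_Sigma(sigma; tau_0,...,tau_{k-1}) sends output position q, lying in *)
(* the l-th block (blocks taken in the order sigma 0, sigma 1, ...) at      *)
(* offset p, to off (sigma l) + tau_(sigma l) p.  This is the convention     *)
(* compatible with the action (sigma . f)(a) = f (a o sigma) on End(A) and   *)
(* the composition (f o (g_m))(a) = f (g_m (m-th block of a)).               *)
Definition vcomp_list k (j : nat -> nat) (sigma : 'S_k)
  (tau : forall m : 'I_k, 'S_(j m)) : seq nat :=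
  flatten [seq [seq (off j (sigma l) + tau (sigma l) p)%N | p <- enum 'I_(j (sigma l))]
          | l <- enum 'I_k].

Definition vcomp_f k (j : nat -> nat) (sigma : 'S_k)
  (tau : forall m : 'I_k, 'S_(j m)) (q : 'I_(ar k j)) : 'I_(ar k j) :=
  insubd q (nth 0 (vcomp_list sigma tau) q).

(* vcomp_f is always a bijection; the fallback branch is never used. *)
Definition vcomp k (j : nat -> nat) (sigma : 'S_k)
  (tau : forall m : 'I_k, 'S_(j m)) : 'S_(ar k j) :=
  match boolP (injectiveb (vcomp_f sigma tau)) with
  | AltTrue h => perm (injectiveP _ h)
  | AltFalse _ => 1%g
  end.

(* EZ^{k+1}(s (x) t_0 (x) ... (x) t_{k-1}) is the sum over all shuffles,    *)
(* encoded as words w over the letters 'I_k.+1 (letter ord0 = s, letter     *)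
(* lift ord0 m = t_m), letter c occurring (dim c) times; the u-th vertex    *)
(* takes in each factor the vertex whose index is the number of occurrences *)
(* of its letter among the first u letters of w.  Then o_E is applied        *)
(* vertexwise and degenerate results vanish in normalized chains.           *)
Definition gamma k (j : nat -> nat) (s : seq 'S_k)
  (t : forall m : 'I_k, seq 'S_(j m)) : chain (ar k j) :=
  let sz (c : 'I_k.+1) := if unlift ord0 c is Some m then size (t m) else size s in
  let D := (\sum_(c < k.+1) (sz c).-1)%N in
  if (s == [::]) || [exists m, t m == [::]] then 0 else
  \sum_(w : D.-tuple 'I_k.+1 | [forall c, count_mem c w == (sz c).-1])
    simp [seq vcomp (nth 1%g s (count_mem ord0 (take u w)))
                    (fun m => nth 1%g (t m) (count_mem (lift ord0 m) (take u w)))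
         | u <- iota 0 D.+1].

Definition t12 : 'S_2 := tperm (inord 0) (inord 1).
Definition t23 : 'S_4 := tperm (inord 1) (inord 2).
Definition t12_34 : 'S_4 :=
  (tperm (inord 0) (inord 1) * tperm (inord 2) (inord 3))%g.

Definition xt_seq (i : nat) : seq 'S_2 := [seq if odd u then t12 else 1%g | u <- iota 0 i.+1].
Definition xt (i : nat) : chain 2 := simp (xt_seq i).

Definition two : nat -> nat := fun _ => 2.

(* F(sigma) = o_E (sigma (x) x~_0 (x) x~_0) *)
Definition Fmap : chain 2 -> chain 4 :=
  linext (fun s => @gamma 2 two (val s) (fun _ => [:: 1%g])).

(* G(sigma) = o_E (x~_0 (x) AW(sigma)),                                      *)
(* AW(s_0..s_n) = sum_q (s_0..s_q) (x) (s_q..s_n).                           *)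
Definition Gmap : chain 2 -> chain 4 :=
  linext (fun s => \sum_(q < size (val s))
     @gamma 2 two [:: 1%g] (fun m : 'I_2 => if m == ord0 then take q.+1 (val s)
                                                    else drop q (val s))).

(* E-algebras.  A is a chain complex of F_2-vector spaces (V, dA).        *)
(* End(A)(r) = Hom(A^{(x) r}, A) is represented by r-multilinear maps     *)
(* {ffun 'I_r -> V} -> V.                                                  *)

Definition upd {V : Type} {r} (a : {ffun 'I_r -> V}) (i : 'I_r) (x : V)
  : {ffun 'I_r -> V} := [ffun q => if q == i then x else a q].

Definition at_ {V : zmodType} {r} (a : {ffun 'I_r -> V}) (n : nat) : V :=
  if insub n is Some q then a q else 0.

Definition block {V : zmodType} k (j : nat -> nat) (a : {ffun 'I_(ar k j) -> V})
  (m : 'I_k) : {ffun 'I_(j m) -> V} := [ffun p : 'I_(j m) => at_ a (off j m + p)%N].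

Definition homd {V : zmodType} (d : V -> V) {r} (f : {ffun 'I_r -> V} -> V)
  (a : {ffun 'I_r -> V}) : V :=
  d (f a) + \sum_(i < r) f (upd a i (d (a i))).

Definition thc {V : lmodType 'F_2} (th : forall r, ndsimp r -> {ffun 'I_r -> V} -> V)
  {r} (c : chain r) (a : {ffun 'I_r -> V}) : V :=
  \sum_(s <- msupp c) c@_s *: th r s a.

Lemma nondeg_id r : nondeg [:: (1 : 'S_r)%g].
Proof. by []. Qed.

Definition idsimp (r : nat) : ndsimp r := exist _ [:: 1%g] (nondeg_id r).

(* An E-algebra structure on the chain complex (V, dA): an operad morphism  *)
(* E -> End(A).                                                              *)
Record Ealg (V : lmodType 'F_2) := {
  dA : {linear V -> V};
  dA2 : forall x, dA (dA x) = 0;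
  th : forall r, ndsimp r -> {ffun 'I_r -> V} -> V;
  th_lin : forall r (s : ndsimp r) a i (k : 'F_2) x y,
      th s (upd a i (k *: x + y)) = k *: th s (upd a i x) + th s (upd a i y);
  th_chain : forall r (s : ndsimp r) a, homd dA (th s) a = thc th (bd_simp (val s)) a;
  (* Sigma_r-equivariance, (sigma . f)(a) = f (a o sigma) *)
  th_equiv : forall r (sigma : 'S_r) (s : ndsimp r) a,
      thc th (act_simp sigma (val s)) a = th s [ffun i => a (sigma i)];
  th_comp : forall k (j : nat -> nat) (s : ndsimp k) (t : forall m : 'I_k, ndsimp (j m)) a,
      thc th (@gamma k j (val s) (fun m => val (t m))) a
      = th s [ffun m => th (t m) (block a m)];
  th_unit : forall a, th (idsimp 1) a = a ord0
}.

Definition cup {V : lmodType 'F_2} (A : Ealg V) (i : nat) (x y : V) : V :=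
  thc (th A) (xt i) [ffun q : 'I_2 => if q == ord0 then x else y].

Definition tup4 {V : zmodType} (x y z w : V) : {ffun 'I_4 -> V} :=
  [ffun q : 'I_4 => nth 0 [:: x; y; z; w] q].

(* Main.v *)
Require Import Defs.
From HB Require Import structures.
From mathcomp Require Import all_boot all_order all_algebra all_fingroup.
From mathcomp Require Import finmap monalg.
From mathcomp Require Import zify.
Import GRing.Theory.
Local Open Scope ring_scope.


Section L0.
Variables (R : nzRingType) (K : choiceType) (M : lmodType R) (g : K -> M).
Definition L (c : {malg R[K]}) : M := \sum_(k <- msupp c) c@_k *: g k.
End L0.
Arguments L {R K M} g c.
Section L.
Variables (R : nzRingType) (K : choiceType) (M : lmodType R) (g : K -> M).

Lemma L_incl c (d : {fset K}) : (msupp c `<=` d)%fset -> L g c = \sum_(k <- d) c@_k *: g k.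
Proof.
move=> sub; rewrite /L (big_fset_incl _ sub) // => k _ kn.
by rewrite (mcoeff_outdom kn) scale0r.
Qed.

Lemma LD c1 c2 : L g (c1 + c2) = L g c1 + L g c2.
Proof.
rewrite (@L_incl _ (msupp c1 `|` msupp c2)%fset) ?msuppD_le //.
rewrite (@L_incl c1 (msupp c1 `|` msupp c2)%fset) ?fsubsetUl //.
rewrite (@L_incl c2 (msupp c1 `|` msupp c2)%fset) ?fsubsetUr //.
by rewrite -big_split /=; apply: eq_bigr => k _; rewrite mcoeffD scalerDl.
Qed.

Lemma LZ a c : L g (a *: c) = a *: L g c.
Proof.
rewrite (@L_incl _ (msupp c)) ?msuppZ_le // /L scaler_sumr.
by apply: eq_bigr => k _; rewrite mcoeffZ scalerA.
Qed.

Lemma L0 : L g 0 = 0.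
Proof. by rewrite /L msupp0 big_seq_fset0. Qed.

Lemma LU k : L g << k >> = g k.
Proof.
rewrite /L msuppU oner_eq0 big_seq_fset1 mcoeffUU scale1r //.
Qed.

Lemma Lsum I (r : seq I) P (F : I -> {malg R[K]}) :
  L g (\sum_(i <- r | P i) F i) = \sum_(i <- r | P i) L g (F i).
Proof. by apply: (big_morph (L g) LD L0). Qed.
End L.

Lemma L_comp (R : nzRingType) (K K' : choiceType) (M : lmodType R) (g : K' -> M)
  (f : K -> {malg R[K']}) c :
  L g (L f c) = \sum_(k <- msupp c) c@_k *: L g (f k).
Proof. by rewrite [L f c]/L Lsum; apply: eq_bigr => k _; rewrite LZ. Qed.

Lemma simp_val r (s : ndsimp r) : simp (val s) = << s >>.
Proof. by rewrite /simp valK. Qed.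

Section A.
Variables (V : lmodType 'F_2) (A : Ealg V).

Lemma thcE r (c : chain r) a : thc (th A) c a = L (fun s => th A s a) c.
Proof. by []. Qed.

Lemma thcU r (s : ndsimp r) a : thc (th A) << s >> a = th A s a.
Proof. by rewrite thcE LU. Qed.

Lemma homd_thc r (c : chain r) a :
  homd (dA A) (thc (th A) c) a = thc (th A) (bd c) a.
Proof.
rewrite /bd /linext thcE -/(L _ c) L_comp /homd !thcE /L.
rewrite raddf_sum /= (exchange_big) -big_split /=.
apply: eq_bigr => s _; rewrite linearZ /= -scaler_sumr -scalerDr.
congr (_ *: _); have := th_chain A s a; rewrite /homd => ->.
by [].
Qed.

Lemma thc_sact r (sigma : 'S_r) (c : chain r) a :
  thc (th A) (sact sigma c) a = thc (th A) c [ffun i => a (sigma i)].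
Proof.
rewrite /sact /linext thcE -/(L _ c) L_comp /=.
by apply: eq_bigr => s _; rewrite -thcE th_equiv.
Qed.
End A.

Lemma t12K : (t12 * t12 = 1)%g.
Proof. exact: tperm2. Qed.

Lemma t12_neq1 : t12 != 1%g.
Proof.
apply/eqP => /(congr1 (fun p : 'S_2 => val (p (inord 0)))).
by rewrite /t12 tpermL perm1 /= !(@inordK 1).
Qed.

Lemma t12X q : (t12 ^+ q = if odd q then t12 else 1)%g.
Proof.
elim: q => [|q IH]; first by rewrite expg0.
by rewrite expgS IH /=; case: (odd q) => /=; rewrite ?t12K ?mulg1.
Qed.

Definition xf (u : nat) : 'S_2 := if odd u then t12 else 1%g.

Lemma xf_neq u : xf u != xf u.+1.
Proof.
rewrite /xf /=; case: (odd u) => /=; first exact: t12_neq1.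
by rewrite eq_sym t12_neq1.
Qed.

Lemma path_iota (e : rel nat) : (forall u, e u u.+1) -> forall n m, path e m (iota m.+1 n).
Proof.
move=> He; elim=> [|n IH] m //=.
by rewrite He IH.
Qed.

Lemma nondeg_xt n : nondeg (xt_seq n).
Proof.
rewrite /nondeg (_ : xt_seq n = map xf (iota 0 n.+1)) // sorted_map /=.
by apply: path_iota => u; exact: xf_neq.
Qed.

Definition xs n : ndsimp 2 := exist _ (xt_seq n) (nondeg_xt n).

Lemma xtE n : xt n = << xs n >>.
Proof. by rewrite /xt -simp_val. Qed.

Lemma nondeg_mul r (sigma : 'S_r) s : nondeg s -> nondeg [seq (tau * sigma)%g | tau <- s].
Proof.
case/andP => ne so; apply/andP; split; first by case: s ne {so}.
rewrite sorted_map; apply: sub_sorted so => x y /=.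
by apply: contra => /eqP /mulIg ->.
Qed.

Lemma take_xt q i : (q <= i)%N -> take q.+1 (xt_seq i) = xt_seq q.
Proof.
by move=> le; rewrite /xt_seq -map_take take_iota (minn_idPl _).
Qed.

Lemma drop_xt q i : (q <= i)%N ->
  drop q (xt_seq i) = [seq (tau * t12 ^+ q)%g | tau <- xt_seq (i - q)].
Proof.
move=> le; rewrite /xt_seq -map_drop drop_iota add0n subSn // -(addn0 q) iotaDl.
rewrite addn0 -!map_comp; apply: eq_map => u /=.
rewrite oddD t12X; case: (odd q); case: (odd u) => /=; by rewrite ?t12K ?mulg1 ?mul1g.
Qed.

Lemma sorted_mid (T : Type) (e : rel T) s1 x y s2 :
  sorted e (s1 ++ x :: y :: s2) -> e x y.
Proof.
elim: s1 => [/= /andP[]//|a s1 IH] /= H; apply: IH.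
exact: path_sorted H.
Qed.

Lemma simp0 r (s : seq 'S_r) : ~~ nondeg s -> simp s = 0.
Proof. by move=> h; rewrite /simp insubN. Qed.

Lemma bdU r (s : ndsimp r) : bd << s >> = bd_simp (val s).
Proof. by rewrite /bd /linext -/(L _ _) LU. Qed.

Lemma sactU r sigma (s : ndsimp r) : sact sigma << s >> = act_simp sigma (val s).
Proof. by rewrite /sact /linext -/(L _ _) LU. Qed.

Lemma xt_seqE n : xt_seq n = map xf (iota 0 n.+1).
Proof. by []. Qed.

Lemma face_mid n k : (k < n)%N -> ~~ nondeg (face k.+1 (xt_seq n.+1)).
Proof.
move=> lt; rewrite /nondeg negb_and; apply/orP; right; apply/negP.
rewrite /face xt_seqE -map_take -map_drop take_iota drop_iota.
rewrite (minn_idPl _); last by lia.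
have E1 : iota 0 k.+1 = iota 0 k ++ [:: k] by rewrite -addn1 iotaD.
have E2 : iota (0 + k.+2) (n.+2 - k.+2) = k.+2 :: iota k.+3 (n - k.+1).
  by rewrite add0n (_ : (n.+2 - k.+2 = (n - k.+1).+1)%N) //; lia.
rewrite E1 E2 map_cat -catA /= => H; have := @sorted_mid _ _ _ _ _ _ H.
by rewrite /xf /= negbK eqxx.
Qed.

Lemma bd_xt0 : bd (xt 0) = 0.
Proof.
rewrite xtE bdU /bd_simp /= big_ord1 simp0 //.
Qed.

Lemma bd_xtS n : bd (xt n.+1) = xt n + sact t12 (xt n).
Proof.
rewrite xtE bdU /bd_simp /= size_map size_iota big_ord_recl big_ord_recr /=.
rewrite big1 ?add0r; last first.
  by move=> k _; rewrite /bump /= add1n simp0 // face_mid.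
rewrite xtE sactU /act_simp addrC; congr (_ + _).
  rewrite /bump /= add1n /face drop_oversize; last by rewrite size_map size_iota.
  by rewrite cats0 take_xt // -simp_val.
rewrite /face take0 cat0s (drop_xt 1 n.+1) // subn1 expg1.
by [].
Qed.
Lemma t23v (q : 'I_4) : nat_of_ord (t23 q) = nth 0%N [:: 0; 2; 1; 3]%N q.
Proof. case: q => [[|[|[|[|?]]]] Hq] //; rewrite /t23 /t12_34 ?permM !permE. all: by rewrite /= -!val_eqE /= !(@inordK 3). Qed.
Lemma t1234v (q : 'I_4) : nat_of_ord (t12_34 q) = nth 0%N [:: 1; 0; 3; 2]%N q.
Proof. case: q => [[|[|[|[|?]]]] Hq] //; rewrite /t23 /t12_34 ?permM !permE. all: rewrite /= -!val_eqE /= !(@inordK 3) //=. all: rewrite ?permE /= -?val_eqE /= ?(@inordK 3) //=. Qed.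
Lemma at_lt (V : zmodType) r (a : {ffun 'I_r -> V}) n (h : (n < r)%N) : at_ a n = a (Ordinal h).
Proof. by rewrite /at_ insubT. Qed.

Lemma char2 (M : lmodType 'F_2) (x : M) : x + x = 0.
Proof.
by rewrite -mulr2n -scaler_nat (pcharf0 (pchar_Fp (isT : prime 2))) scale0r.
Qed.

Lemma oppr_char2 (M : lmodType 'F_2) (x : M) : - x = x.
Proof. by apply/eqP; rewrite eq_sym -addr_eq0 char2. Qed.

Section Main.
Variables (V : lmodType 'F_2) (A : Ealg V).

Lemma thcD r (c1 c2 : chain r) a : thc (th A) (c1 + c2) a = thc (th A) c1 a + thc (th A) c2 a.
Proof. by rewrite !thcE LD. Qed.

Lemma thc0 r a : thc (th A) (0 : chain r) a = 0.
Proof. by rewrite thcE L0. Qed.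

Lemma cupE n x y : cup A n x y = th A (xs n) [ffun q : 'I_2 => if q == ord0 then x else y].
Proof. by rewrite /cup xtE thcU. Qed.

Lemma xs0 : xs 0 = idsimp 2.
Proof. by apply: val_inj. Qed.

Lemma th_map r (s' s0 : ndsimp r) sigma b :
  val s' = [seq (tau * sigma)%g | tau <- val s0] -> th A s' b = th A s0 [ffun j => b (sigma j)].
Proof.
move=> E; rewrite -th_equiv /act_simp -E simp_val thcU //.
Qed.
End Main.

Section P.
Variables (V : lmodType 'F_2) (A : Ealg V) (al be : V).

Lemma tup_t23 : [ffun q => tup4 al al be be (t23 q)] = tup4 al be al be.
Proof.
apply/ffunP => q; rewrite !ffunE t23v.
by case: q => [[|[|[|[|?]]]] Hq].
Qed.

Lemma tup_t1234 : [ffun q => tup4 al al be be (t12_34 q)] = tup4 al al be be.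
Proof.
apply/ffunP => q; rewrite !ffunE t1234v.
by case: q => [[|[|[|[|?]]]] Hq].
Qed.

Lemma F_part i : thc (th A) (sact t23 (Fmap (xt i))) (tup4 al al be be)
  = cup A i (cup A 0 al be) (cup A 0 al be).
Proof.
rewrite thc_sact tup_t23 /Fmap /linext -/(L _ _) xtE LU.
rewrite -[LHS]/(thc (th A) (@gamma 2 two (val (xs i)) (fun m => val ((fun _ => idsimp 2) m))) (tup4 al be al be)).
rewrite th_comp cupE; f_equal; apply/ffunP => m; rewrite !ffunE cupE xs0.
rewrite if_same; case: m => [[|[|?]] Hm] //; f_equal; apply/ffunP => p; rewrite !ffunE.
all: case: p => [[|[|?]] Hp] //.
all: by rewrite /= /at_ insubT /= ffunE /=.
Qed.

Lemma nondeg_tq i q (hq : (q <= i)%N) (m : 'I_2) :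
  nondeg (if m == ord0 then take q.+1 (xt_seq i) else drop q (xt_seq i)).
Proof.
case: ifP => _; first by rewrite take_xt //; exact: nondeg_xt.
by rewrite drop_xt //; apply: nondeg_mul; exact: nondeg_xt.
Qed.

Definition tq i q (hq : (q <= i)%N) (m : 'I_2) : ndsimp (two m) := exist (fun s : seq ('S_2) => nondeg s) _ (nondeg_tq i q hq m).
Arguments tq {i q}.

Lemma block0 (x y z w : V) (h : (0 < 2)%N) :
  @block V 2 two (tup4 x y z w) (Ordinal h) = [ffun p : 'I_2 => if p == ord0 then x else y].
Proof.
apply/ffunP => p; rewrite !ffunE.
case: p => [[|[|?]] Hp] //.
all: by rewrite /= /at_ insubT /= ffunE /=.
Qed.

Lemma block1 (x y z w : V) (h : (1 < 2)%N) :
  @block V 2 two (tup4 x y z w) (Ordinal h) = [ffun p : 'I_2 => if p == ord0 then z else w].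
Proof.
apply/ffunP => p; rewrite !ffunE.
case: p => [[|[|?]] Hp] //.
all: by rewrite /= /at_ insubT /= ffunE /=.
Qed.

Lemma G_part i : thc (th A) (Gmap (xt i)) (tup4 al al be be)
  = \sum_(j < i.+1) cup A 0 (cup A j al al) (cup A (i - j) be be).
Proof.
rewrite /Gmap /linext -/(L _ _) xtE LU thcE Lsum.
rewrite (_ : size (val (xs i)) = i.+1); last by rewrite /= size_map size_iota.
apply: eq_bigr => q _; have hq : (q <= i)%N by rewrite -ltnS.
rewrite -thcE.
rewrite -[LHS]/(thc (th A) (@gamma 2 two (val (idsimp 2)) (fun m => val (tq hq m))) (tup4 al al be be)).
rewrite th_comp cupE xs0; f_equal; apply/ffunP => m; rewrite !ffunE.
case: m => [[|[|?]] Hm] //; [rewrite -[_ == ord0]/true | rewrite -[_ == ord0]/false].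
  have -> : tq hq (Ordinal Hm) = xs q.
    apply: val_inj; exact: (take_xt _ _ hq).
  by rewrite cupE block0.
have Eb : @block V 2 two (tup4 al al be be) (Ordinal Hm) = [ffun _ : 'I_2 => be].
  by rewrite block1; apply/ffunP => p; rewrite !ffunE if_same.
rewrite Eb cupE (@th_map V A 2 (tq hq (Ordinal Hm)) (xs (i - q)) (t12 ^+ q)%g); last first.
  exact: (drop_xt _ _ hq).
f_equal; apply/ffunP => p; rewrite !ffunE; by case: ifP.
Qed.
End P.

Theorem mainTheorem2
  (H : {linear chain 2 -> chain 4})
  (H_deg : forall (n : nat) (c : chain 2), homog n c -> homog n.+1 (H c))
  (H_htpy : forall c : chain 2, bd (H c) + H (bd c) = sact t23 (Fmap c) + Gmap c)
  (H_equiv : forall c : chain 2, H (sact t12 c) = sact t12_34 (H c)) :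
  forall (V : lmodType 'F_2) (A : Ealg V) (i : nat) (alpha beta : V),
    homd (dA A) (thc (th A) (H (xt i))) (tup4 alpha alpha beta beta)
    = cup A i (cup A 0 alpha beta) (cup A 0 alpha beta)
      + \sum_(j < i.+1) cup A 0 (cup A j alpha alpha) (cup A (i - j) beta beta).
Proof.
move=> V A i al be.
rewrite homd_thc.
have E : bd (H (xt i)) = sact t23 (Fmap (xt i)) + Gmap (xt i) + H (bd (xt i)).
  by rewrite -H_htpy -addrA char2 addr0.
have HB : thc (th A) (H (bd (xt i))) (tup4 al al be be) = 0.
  case: i {E} => [|n]; first by rewrite bd_xt0 linear0 thc0.
  by rewrite bd_xtS linearD /= H_equiv thcD thc_sact tup_t1234 char2.
by rewrite E !thcD HB addr0 F_part G_part.
Qed.
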